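(* Let $P=\{S_1,\ldots,S_n\}$ be a homothetic packing of $n$ squares with contact graph $G=([n],E)$, and let $\{i,j\},\{k,\ell\}\in E$ be two edges sharing no vertex. Then: (1) the interiors of $S_i\cup S_j$ and $S_k\cup S_\ell$ are disjoint; (2) if the closed segments $[p_i,p_j]$ and $[p_k,p_\ell]$ intersect, then the squares $S_i,S_j,S_k,S_\ell$ share a corner, the edges $\{i,j\},\{k,\ell\}$ lie in $E_x\cap E_y$, and the edges $\{i,k\},\{i,\ell\},\{j,k\},\{j,\ell\}$ lie in the symmetric difference $E_x\triangle E_y$.
   Context: Let $S=\{(x,y): -1\le x,y\le 1\}$. A homothetic packing of $n$ squares is a set $P=\{S_1,\ldots,S_n\}$ with $S_i=r_iS+p_i$, $r_i>0$, $p_i=(x_i,y_i)\in\mathbb{R}^2$, such that distinct squares have disjoint interiors. Its contact graph is $G=([n],E)$ where $\{i,j\}\in E$ iff $i\ne j$ and $S_i\cap S_j\ne\emptyset$. $E_x$ is the set of pairs $\{i,j\}\in E$ with $r_i+r_j=|x_i-x_j|\ge|y_i-y_j|$, and $E_y$ the set with $r_i+r_j=|y_i-y_j|\ge|x_i-x_j|$. $[p,q]$ denotes the closed line segment between $p$ and $q$. Four squares share a corner if they have a common point which is a corner of each of them. *)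

(* Defs.v *)
From Stdlib Require Import Reals.
Open Scope R_scope.

Definition pt := (R * R)%type.

(* A packing of n squares: square i (for i < n) is S_i = r i * S + (px i, py i),
   i.e. the closed axis-parallel square of half-side r i centred at (px i, py i). *)
Definition in_square (r px py : nat -> R) (i : nat) (z : pt) : Prop :=
  Rabs (fst z - px i) <= r i /\ Rabs (snd z - py i) <= r i.

(* Topological interior of a set of the plane (product topology, given by
   sup-norm balls). *)
Definition interior2 (A : pt -> Prop) (z : pt) : Prop :=
  exists eps, 0 < eps /\
    forall w : pt, Rabs (fst w - fst z) < eps -> Rabs (snd w - snd z) < eps -> A w.

Definition homothetic_packing (n : nat) (r px py : nat -> R) : Prop :=
  (forall i, (i < n)%nat -> 0 < r i) /\
  (forall i j, (i < n)%nat -> (j < n)%nat -> i <> j ->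
     forall z, ~ (interior2 (in_square r px py i) z /\ interior2 (in_square r px py j) z)).

Definition edgeE (n : nat) (r px py : nat -> R) (i j : nat) : Prop :=
  (i < n)%nat /\ (j < n)%nat /\ i <> j /\
  exists z, in_square r px py i z /\ in_square r px py j z.

Definition edgeEx (n : nat) (r px py : nat -> R) (i j : nat) : Prop :=
  edgeE n r px py i j /\
  r i + r j = Rabs (px i - px j) /\ Rabs (px i - px j) >= Rabs (py i - py j).

Definition edgeEy (n : nat) (r px py : nat -> R) (i j : nat) : Prop :=
  edgeE n r px py i j /\
  r i + r j = Rabs (py i - py j) /\ Rabs (py i - py j) >= Rabs (px i - px j).

Definition edge_symdiff (n : nat) (r px py : nat -> R) (i j : nat) : Prop :=
  (edgeEx n r px py i j /\ ~ edgeEy n r px py i j) \/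
  (edgeEy n r px py i j /\ ~ edgeEx n r px py i j).

Definition in_segment (p q z : pt) : Prop :=
  exists t, 0 <= t <= 1 /\
    fst z = (1 - t) * fst p + t * fst q /\ snd z = (1 - t) * snd p + t * snd q.

Definition is_corner (r px py : nat -> R) (i : nat) (z : pt) : Prop :=
  (fst z = px i + r i \/ fst z = px i - r i) /\
  (snd z = py i + r i \/ snd z = py i - r i).

Definition centre (px py : nat -> R) (i : nat) : pt := (px i, py i).

(* Main.v *)
Require Import Defs.
From Stdlib Require Import Reals Lra Psatz Classical.
Open Scope R_scope.

Ltac rabs := unfold Rabs in *; repeat match goal with
  | H : context [Rcase_abs ?X] |- _ => destruct (Rcase_abs X)
  | |- context [Rcase_abs ?X] => destruct (Rcase_abs X) end; try lra.

Lemma abs_lt_of (x r : R) : -r < x < r -> Rabs x < r. Proof. intros; rabs. Qed.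
Lemma abs_le_of (x r : R) : -r <= x <= r -> Rabs x <= r. Proof. intros; rabs. Qed.
Lemma abs_le_to (x r : R) : Rabs x <= r -> -r <= x <= r. Proof. intros; rabs. Qed.
Lemma abs_lt_to (x r : R) : Rabs x < r -> -r < x < r. Proof. intros; rabs. Qed.
Lemma abs_ge_to (x r : R) : Rabs x >= r -> x >= r \/ x <= -r. Proof. intros; rabs. Qed.

Lemma frac_lt (d s : R) : 0 < s -> Rabs d < s -> exists q, d = q*s /\ -1 < q < 1.
Proof.
  intros Hs Hd. apply abs_lt_to in Hd. exists (d/s). split.
  - field; lra.
  - assert (d = (d/s)*s) by (field; lra). set (q := d/s) in *. split; nra.
Qed.

Definition strict (r px py : nat -> R) a (w : pt) :=
  Rabs (fst w - px a) < r a /\ Rabs (snd w - py a) < r a.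

Lemma strict_interior r px py a w : strict r px py a w -> interior2 (in_square r px py a) w.
Proof.
  intros [H1 H2]. exists (Rmin (r a - Rabs (fst w - px a)) (r a - Rabs (snd w - py a))).
  split. { apply Rmin_glb_lt; lra. }
  intros w' A B. pose proof (Rmin_l (r a - Rabs (fst w - px a)) (r a - Rabs (snd w - py a))).
  pose proof (Rmin_r (r a - Rabs (fst w - px a)) (r a - Rabs (snd w - py a))).
  unfold in_square. split.
  - pose proof (Rabs_triang (fst w' - fst w) (fst w - px a)).
    replace (fst w' - fst w + (fst w - px a)) with (fst w' - px a) in H3 by ring. lra.
  - pose proof (Rabs_triang (snd w' - snd w) (snd w - py a)).
    replace (snd w' - snd w + (snd w - py a)) with (snd w' - py a) in H3 by ring. lra.
Qed.

Lemma no_common n r px py a b w : homothetic_packing n r px py ->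
  (a < n)%nat -> (b < n)%nat -> a <> b -> strict r px py a w -> strict r px py b w -> False.
Proof.
  intros [_ Hd] Ha Hb Hab H1 H2. apply (Hd a b Ha Hb Hab w); split; apply strict_interior; auto.
Qed.

Lemma sep n r px py a b : homothetic_packing n r px py ->
  (a < n)%nat -> (b < n)%nat -> a <> b ->
  Rabs (px a - px b) >= r a + r b \/ Rabs (py a - py b) >= r a + r b.
Proof.
  intros HP Ha Hb Hab.
  destruct (Rge_dec (Rabs (px a - px b)) (r a + r b)) as [G|G]; [left; auto|].
  destruct (Rge_dec (Rabs (py a - py b)) (r a + r b)) as [G'|G']; [right; auto|].
  exfalso. pose proof (proj1 HP a Ha). pose proof (proj1 HP b Hb).
  apply Rnot_ge_lt in G. apply Rnot_ge_lt in G'.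
  rewrite Rabs_minus_sym in G, G'.
  assert (Hs : 0 < r a + r b) by lra.
  destruct (frac_lt _ _ Hs G) as [q1 [E1 B1]].
  destruct (frac_lt _ _ Hs G') as [q2 [E2 B2]].
  apply (no_common n r px py a b (px a + r a * q1, py a + r a * q2)); auto;
  split; simpl; apply abs_lt_of; nra.
Qed.

Lemma push1 (c x r d : R) : Rabs (x - c) <= r -> 0 < d < r ->
  exists x', Rabs (x' - x) <= d /\ Rabs (x' - c) < r.
Proof.
  intros H Hd. apply abs_le_to in H. destruct (Rle_dec x c).
  - exists (x + d). split; apply abs_lt_of || apply abs_le_of; lra.
  - exists (x - d). split; apply abs_lt_of || apply abs_le_of; lra.
Qed.

Lemma step1 r px py a z e : 0 < r a -> 0 < e -> in_square r px py a z ->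
  exists w, strict r px py a w /\ Rabs (fst w - fst z) < e /\ Rabs (snd w - snd z) < e.
Proof.
  intros Hr He [H1 H2].
  assert (Hd : 0 < Rmin (r a) e / 2 < r a).
  { pose proof (Rmin_l (r a) e). split; [apply Rdiv_lt_0_compat; [apply Rmin_glb_lt|]|]; lra. }
  pose proof (Rmin_r (r a) e).
  destruct (push1 _ _ _ _ H1 Hd) as [x' [A1 A2]].
  destruct (push1 _ _ _ _ H2 Hd) as [y' [B1 B2]].
  exists (x', y'). unfold strict; simpl. repeat split; auto; lra.
Qed.

Lemma step2 r px py a b w : 0 < r b -> strict r px py a w -> in_square r px py b w ->
  exists w', strict r px py a w' /\ strict r px py b w'.
Proof.
  intros Hr [H1 H2] [K1 K2].
  set (m := Rmin (r b) (Rmin (r a - Rabs (fst w - px a)) (r a - Rabs (snd w - py a)))).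
  assert (Hm : 0 < m). { unfold m; repeat apply Rmin_glb_lt; lra. }
  pose proof (Rmin_l (r b) (Rmin (r a - Rabs (fst w - px a)) (r a - Rabs (snd w - py a)))).
  pose proof (Rmin_r (r b) (Rmin (r a - Rabs (fst w - px a)) (r a - Rabs (snd w - py a)))).
  pose proof (Rmin_l (r a - Rabs (fst w - px a)) (r a - Rabs (snd w - py a))).
  pose proof (Rmin_r (r a - Rabs (fst w - px a)) (r a - Rabs (snd w - py a))).
  fold m in H, H0.
  assert (Hd : 0 < m/2 < r b) by lra.
  destruct (push1 _ _ _ _ K1 Hd) as [x' [A1 A2]].
  destruct (push1 _ _ _ _ K2 Hd) as [y' [B1 B2]].
  exists (x', y'). unfold strict; simpl. repeat split; auto.
  - pose proof (Rabs_triang (x' - fst w) (fst w - px a)).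
    replace (x' - fst w + (fst w - px a)) with (x' - px a) in H5 by ring. lra.
  - pose proof (Rabs_triang (y' - snd w) (snd w - py a)).
    replace (y' - snd w + (snd w - py a)) with (y' - py a) in H5 by ring. lra.
Qed.

Lemma part1 n r px py i j k l : homothetic_packing n r px py ->
  (i < n)%nat -> (j < n)%nat -> (k < n)%nat -> (l < n)%nat ->
  i <> k -> i <> l -> j <> k -> j <> l ->
  forall z,
     ~ (interior2 (fun w : pt => in_square r px py i w \/ in_square r px py j w) z /\
        interior2 (fun w : pt => in_square r px py k w \/ in_square r px py l w) z).
Proof.
  intros HP Hi Hj Hk Hl ik il jk jl z [[e1 [He1 H1]] [e2 [He2 H2]]].
  pose proof (proj1 HP).
  assert (Z : in_square r px py i z \/ in_square r px py j z)
    by (apply H1; rewrite Rminus_diag, Rabs_R0; lra).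
  assert (G : forall a, (a < n)%nat -> a <> k -> a <> l -> in_square r px py a z -> False).
  { intros a Ha ak al Za.
    destruct (step1 r px py a z e2 (H a Ha) He2 Za) as [w [Sw [W1 W2]]].
    destruct (H2 w W1 W2) as [Wb|Wb].
    - destruct (step2 r px py a k w (H k Hk) Sw Wb) as [w' [S1 S2]].
      exact (no_common n r px py a k w' HP Ha Hk ak S1 S2).
    - destruct (step2 r px py a l w (H l Hl) Sw Wb) as [w' [S1 S2]].
      exact (no_common n r px py a l w' HP Ha Hl al S1 S2). }
  destruct Z as [Z|Z]; [apply (G i)|apply (G j)]; auto.
Qed.

Lemma pinm (X Y a b : R) : -a <= X <= a -> -b <= Y <= b -> Rabs (X - Y) >= a + b ->
  (X = a /\ Y = -b) \/ (X = -a /\ Y = b).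
Proof. intros; rabs; first [left; split; lra | right; split; lra]. Qed.
Lemma pinm2 (X Y a b : R) : -a <= X <= a -> -b <= Y <= b -> Rabs (X - Y) >= b + a ->
  (X = a /\ Y = -b) \/ (X = -a /\ Y = b).
Proof. intros; rabs; first [left; split; lra | right; split; lra]. Qed.
Lemma pinp (X Y a b : R) : -a <= X <= a -> -b <= Y <= b -> Rabs (X + Y) >= a + b ->
  (X = a /\ Y = b) \/ (X = -a /\ Y = -b).
Proof. intros; rabs; first [left; split; lra | right; split; lra]. Qed.

Definition xor3 (X Y c : R) := (Rabs X = c /\ Rabs Y < c) \/ (Rabs Y = c /\ Rabs X < c).

Ltac absg := unfold Rabs; repeat match goal with
  | |- context [Rcase_abs ?X] => destruct (Rcase_abs X) end; lra.
Ltac sd := lazymatch goal with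
  | |- _ /\ _ => split; sd
  | |- _ \/ _ => first [left; sd | right; sd]
  | |- xor3 _ _ _ => unfold xor3; sd
  | _ => absg end.

Lemma core (ax ay bx by' gx gy hx hy ri rj rk rl T S : R) :
  0 < ri -> 0 < rj -> 0 < rk -> 0 < rl ->
  -T <= ax <= T -> -T <= ay <= T ->
  -(ri+rj-T) <= bx <= ri+rj-T -> -(ri+rj-T) <= by' <= ri+rj-T ->
  -S <= gx <= S -> -S <= gy <= S ->
  -(rk+rl-S) <= hx <= rk+rl-S -> -(rk+rl-S) <= hy <= rk+rl-S ->
  0 <= ax*bx -> 0 <= ay*by' -> 0 <= gx*hx -> 0 <= gy*hy ->
  Rabs (gx-ax) >= ri+rk \/ Rabs (gy-ay) >= ri+rk ->
  Rabs (ax+hx) >= ri+rl \/ Rabs (ay+hy) >= ri+rl ->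
  Rabs (bx+gx) >= rj+rk \/ Rabs (by'+gy) >= rj+rk ->
  Rabs (bx-hx) >= rj+rl \/ Rabs (by'-hy) >= rj+rl ->
  ((ax = ri \/ ax = -ri) /\ (ay = ri \/ ay = -ri) /\
   (bx = rj \/ bx = -rj) /\ (by' = rj \/ by' = -rj) /\
   (gx = rk \/ gx = -rk) /\ (gy = rk \/ gy = -rk) /\
   (hx = rl \/ hx = -rl) /\ (hy = rl \/ hy = -rl)) /\
  (Rabs (ax+bx) = ri+rj /\ Rabs (ay+by') = ri+rj /\
   Rabs (gx+hx) = rk+rl /\ Rabs (gy+hy) = rk+rl) /\
  xor3 (gx-ax) (gy-ay) (ri+rk) /\ xor3 (ax+hx) (ay+hy) (ri+rl) /\
  xor3 (bx+gx) (by'+gy) (rj+rk) /\ xor3 (bx-hx) (by'-hy) (rj+rl).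
Proof.
  intros Pi Pj Pk Pl A1 A2 B1 B2 G1 G2 H1 H2 M1 M2 M3 M4 S1 S2 S3 S4.
  assert (T + S >= ri + rk) by (destruct S1 as [Q|Q]; rabs).
  assert (T + (rk+rl-S) >= ri + rl) by (destruct S2 as [Q|Q]; rabs).
  assert ((ri+rj-T) + S >= rj + rk) by (destruct S3 as [Q|Q]; rabs).
  assert ((ri+rj-T) + (rk+rl-S) >= rj + rl) by (destruct S4 as [Q|Q]; rabs).
  assert (ET : T = ri) by lra. assert (ES : S = rk) by lra. subst T S.
  replace (ri+rj-ri) with rj in * by ring. replace (rk+rl-rk) with rl in * by ring.
  destruct S1 as [Q|Q]; [destruct (pinm2 _ _ _ _ G1 A1 Q) as [[? ?]|[? ?]]
                        |destruct (pinm2 _ _ _ _ G2 A2 Q) as [[? ?]|[? ?]]]; clear Q;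
  (destruct S2 as [Q|Q]; [destruct (pinp _ _ _ _ A1 H1 Q) as [[? ?]|[? ?]]
                        |destruct (pinp _ _ _ _ A2 H2 Q) as [[? ?]|[? ?]]]; clear Q);
  (destruct S3 as [Q|Q]; [destruct (pinp _ _ _ _ B1 G1 Q) as [[? ?]|[? ?]]
                        |destruct (pinp _ _ _ _ B2 G2 Q) as [[? ?]|[? ?]]]; clear Q);
  (destruct S4 as [Q|Q]; [destruct (pinm _ _ _ _ B1 H1 Q) as [[? ?]|[? ?]]
                        |destruct (pinm _ _ _ _ B2 H2 Q) as [[? ?]|[? ?]]]; clear Q);
  subst; try (exfalso; nra); sd.
Qed.

Lemma seg_facts (p q t z RR : R) : 0 <= t <= 1 -> z = (1-t)*p + t*q -> Rabs (p - q) <= RR ->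
  (-(t*RR) <= z - p <= t*RR) /\ (-(RR - t*RR) <= q - z <= RR - t*RR) /\ 0 <= (z-p)*(q-z).
Proof.
  intros Ht Hz HR. apply abs_le_to in HR. subst z. destruct Ht, HR.
  replace ((1 - t) * p + t * q - p) with (t*(q-p)) by ring.
  replace (q - ((1 - t) * p + t * q)) with ((1-t)*(q-p)) by ring.
  assert (0 <= 1 - t) by lra.
  pose proof (Rmult_le_pos t (RR - (q-p)) H ltac:(lra)).
  pose proof (Rmult_le_pos t (RR + (q-p)) H ltac:(lra)).
  pose proof (Rmult_le_pos (1-t) (RR - (q-p)) H3 ltac:(lra)).
  pose proof (Rmult_le_pos (1-t) (RR + (q-p)) H3 ltac:(lra)).
  split; [split; nra|]. split; [split; nra|].
  replace (t * (q - p) * ((1 - t) * (q - p))) with ((t*(1-t))*((q-p)*(q-p))) by ring.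
  apply Rmult_le_pos; [apply Rmult_le_pos; lra | pose proof (Rle_0_sqr (q-p)); unfold Rsqr in *; lra].
Qed.

Lemma contact n r px py a b : edgeE n r px py a b ->
  Rabs (px a - px b) <= r a + r b /\ Rabs (py a - py b) <= r a + r b.
Proof.
  intros [_ [_ [_ [w [[A1 A2] [B1 B2]]]]]].
  apply abs_le_to in A1, A2, B1, B2. split; apply abs_le_of; lra.
Qed.

Lemma xr_neg X Y c : xor3 (-X) (-Y) c -> xor3 X Y c.
Proof. unfold xor3; rewrite !Rabs_Ropp; auto. Qed.

Lemma symd n r px py a b z : (a < n)%nat -> (b < n)%nat -> a <> b ->
  in_square r px py a z -> in_square r px py b z ->
  xor3 (px a - px b) (py a - py b) (r a + r b) -> edge_symdiff n r px py a b.
Proof.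
  intros Ha Hb ab Za Zb X.
  assert (E : edgeE n r px py a b) by (repeat split; auto; exists z; auto).
  unfold edge_symdiff, edgeEx, edgeEy.
  destruct X as [[A B]|[A B]]; [left|right]; (split; [split; [exact E|split; lra]|intros [_ [C D]]; lra]).
Qed.

Lemma both n r px py a b : edgeE n r px py a b ->
  Rabs (px a - px b) = r a + r b -> Rabs (py a - py b) = r a + r b ->
  edgeEx n r px py a b /\ edgeEy n r px py a b.
Proof. intros E A B. unfold edgeEx, edgeEy. split; (split; [exact E|split; lra]). Qed.

Lemma sq_of r px py a zx zy : (zx - px a = r a \/ zx - px a = - r a) ->
  (zy - py a = r a \/ zy - py a = - r a) -> 0 < r a ->
  in_square r px py a (zx, zy) /\ is_corner r px py a (zx, zy).
Proof.
  intros A B P. unfold in_square, is_corner; simpl.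
  split; [split; apply abs_le_of; lra|].
  split; [destruct A; [left|right]; lra | destruct B; [left|right]; lra].
Qed.

Lemma sq_of' r px py a zx zy : (px a - zx = r a \/ px a - zx = - r a) ->
  (py a - zy = r a \/ py a - zy = - r a) -> 0 < r a ->
  in_square r px py a (zx, zy) /\ is_corner r px py a (zx, zy).
Proof.
  intros A B P. apply sq_of; auto; lra.
Qed.

Theorem lemma12 (n : nat) (r px py : nat -> R) (i j k l : nat) :
  homothetic_packing n r px py ->
  edgeE n r px py i j -> edgeE n r px py k l ->
  i <> k -> i <> l -> j <> k -> j <> l ->
  (* (1) interiors of S_i ∪ S_j and S_k ∪ S_l are disjoint *)
  (forall z,
     ~ (interior2 (fun w : pt => in_square r px py i w \/ in_square r px py j w) z /\
        interior2 (fun w : pt => in_square r px py k w \/ in_square r px py l w) z)) /\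
  (* (2) *)
  ((exists z, in_segment (centre px py i) (centre px py j) z /\
              in_segment (centre px py k) (centre px py l) z) ->
   (exists c, is_corner r px py i c /\ is_corner r px py j c /\
              is_corner r px py k c /\ is_corner r px py l c) /\
   (edgeEx n r px py i j /\ edgeEy n r px py i j) /\
   (edgeEx n r px py k l /\ edgeEy n r px py k l) /\
   edge_symdiff n r px py i k /\ edge_symdiff n r px py i l /\
   edge_symdiff n r px py j k /\ edge_symdiff n r px py j l).
Proof.
  intros HP Eij Ekl ik il jk jl.
  pose proof Eij as [Hi [Hj [ij _]]]. pose proof Ekl as [Hk [Hl [kl _]]].
  split; [apply (part1 n r px py i j k l); auto|].
  intros [[zx zy] [[t [Ht [Zx Zy]]] [s [Hs [Zx' Zy']]]]].
  unfold centre in *; simpl in *.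
  pose proof (proj1 HP i Hi) as Pi. pose proof (proj1 HP j Hj) as Pj.
  pose proof (proj1 HP k Hk) as Pk. pose proof (proj1 HP l Hl) as Pl.
  destruct (contact _ _ _ _ _ _ Eij) as [Cx Cy].
  destruct (contact _ _ _ _ _ _ Ekl) as [Cx' Cy'].
  destruct (seg_facts _ _ _ _ _ Ht Zx Cx) as [A1 [B1 M1]].
  destruct (seg_facts _ _ _ _ _ Ht Zy Cy) as [A2 [B2 M2]].
  destruct (seg_facts _ _ _ _ _ Hs Zx' Cx') as [G1 [H1 M3]].
  destruct (seg_facts _ _ _ _ _ Hs Zy' Cy') as [G2 [H2 M4]].
  assert (S1 : Rabs ((zx - px k) - (zx - px i)) >= r i + r k \/
               Rabs ((zy - py k) - (zy - py i)) >= r i + r k).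
  { replace ((zx - px k) - (zx - px i)) with (px i - px k) by ring.
    replace ((zy - py k) - (zy - py i)) with (py i - py k) by ring.
    apply (sep n); auto. }
  assert (S2 : Rabs ((zx - px i) + (px l - zx)) >= r i + r l \/
               Rabs ((zy - py i) + (py l - zy)) >= r i + r l).
  { replace ((zx - px i) + (px l - zx)) with (-(px i - px l)) by ring.
    replace ((zy - py i) + (py l - zy)) with (-(py i - py l)) by ring.
    rewrite !Rabs_Ropp. apply (sep n); auto. }
  assert (S3 : Rabs ((px j - zx) + (zx - px k)) >= r j + r k \/
               Rabs ((py j - zy) + (zy - py k)) >= r j + r k).
  { replace ((px j - zx) + (zx - px k)) with (px j - px k) by ring.
    replace ((py j - zy) + (zy - py k)) with (py j - py k) by ring.
    apply (sep n); auto. }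
  assert (S4 : Rabs ((px j - zx) - (px l - zx)) >= r j + r l \/
               Rabs ((py j - zy) - (py l - zy)) >= r j + r l).
  { replace ((px j - zx) - (px l - zx)) with (px j - px l) by ring.
    replace ((py j - zy) - (py l - zy)) with (py j - py l) by ring.
    apply (sep n); auto. }
  destruct (core _ _ _ _ _ _ _ _ _ _ _ _ _ _ Pi Pj Pk Pl A1 A2 B1 B2 G1 G2 H1 H2
              M1 M2 M3 M4 S1 S2 S3 S4)
    as [[Ci1 [Ci2 [Cj1 [Cj2 [Ck1 [Ck2 [Cl1 Cl2]]]]]]] [[Eij1 [Eij2 [Ekl1 Ekl2]]] [Xik [Xil [Xjk Xjl]]]]].
  destruct (sq_of r px py i zx zy Ci1 Ci2 Pi) as [Qi Ki].
  destruct (sq_of' r px py j zx zy Cj1 Cj2 Pj) as [Qj Kj].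
  destruct (sq_of r px py k zx zy Ck1 Ck2 Pk) as [Qk Kk].
  destruct (sq_of' r px py l zx zy Cl1 Cl2 Pl) as [Ql Kl].
  split; [exists (zx, zy); auto|].
  replace ((zx - px i) + (px j - zx)) with (-(px i - px j)) in Eij1 by ring.
  replace ((zy - py i) + (py j - zy)) with (-(py i - py j)) in Eij2 by ring.
  replace ((zx - px k) + (px l - zx)) with (-(px k - px l)) in Ekl1 by ring.
  replace ((zy - py k) + (py l - zy)) with (-(py k - py l)) in Ekl2 by ring.
  rewrite Rabs_Ropp in Eij1, Eij2, Ekl1, Ekl2.
  replace ((zx - px k) - (zx - px i)) with (px i - px k) in Xik by ring.
  replace ((zy - py k) - (zy - py i)) with (py i - py k) in Xik by ring.
  replace ((zx - px i) + (px l - zx)) with (-(px i - px l)) in Xil by ring.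
  replace ((zy - py i) + (py l - zy)) with (-(py i - py l)) in Xil by ring.
  replace ((px j - zx) + (zx - px k)) with (px j - px k) in Xjk by ring.
  replace ((py j - zy) + (zy - py k)) with (py j - py k) in Xjk by ring.
  replace ((px j - zx) - (px l - zx)) with (px j - px l) in Xjl by ring.
  replace ((py j - zy) - (py l - zy)) with (py j - py l) in Xjl by ring.
  apply xr_neg in Xil.
  split; [apply both; auto|].
  split; [apply both; auto|].
  split; [apply (symd n r px py i k (zx, zy)); auto|].
  split; [apply (symd n r px py i l (zx, zy)); auto|].
  split; [apply (symd n r px py j k (zx, zy)); auto|].
  apply (symd n r px py j l (zx, zy)); auto.
Qed.
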